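(* Let $(H,+)$ be a nontrivial additive subgroup of $(\mathbb R,+)$, let $r\in\mathbb R$ with $0<r\le\frac12$ or $r\ge2$ such that $rH=H$, and let $C=\langle x\rangle$ be an infinite cyclic group. Let $G=H\rtimes C$ be the semidirect product in which $x$ acts on $H$ by multiplication by $r$, i.e. $xzx^{-1}=rz$ for all $z\in H$. Then for every $t\in H\setminus\{0\}$, the elements $tx$ and $x$ generate a free submonoid of $G$ of rank $2$ (in particular a noncommutative free monoid). *)

(* Defs.v *)
From Stdlib Require Import Reals ZArith List.
Open Scope R_scope.

Definition is_add_subgroup (H : R -> Prop) : Prop :=
  H 0 /\ (forall a b, H a -> H b -> H (a + b)) /\ (forall a, H a -> H (- a)).

Definition scaled_eq (r : R) (H : R -> Prop) : Prop :=
  forall y, H y <-> exists z, H z /\ y = r * z.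

(* The semidirect product R ⋊_r <x>, elements (z, n) standing for z x^n,
   with x z x^{-1} = r z, so (a x^m)(b x^n) = (a + r^m b) x^(m+n).
   G = H ⋊ <x> is the subgroup of pairs with first component in H. *)
Definition sdmul (r : R) (p q : R * Z) : R * Z :=
  (fst p + powerRZ r (snd p) * fst q, (snd p + snd q)%Z).

Definition sdone : R * Z := (0, 0%Z).

Fixpoint eval_word (r : R) (g1 g2 : R * Z) (w : list bool) : R * Z :=
  match w with
  | nil => sdone
  | b :: w' => sdmul r (if b then g1 else g2) (eval_word r g1 g2 w')
  end.

Definition free_submonoid2 (r : R) (g1 g2 : R * Z) : Prop :=
  forall w1 w2 : list bool, eval_word r g1 g2 w1 = eval_word r g1 g2 w2 -> w1 = w2.

(* Main.v *)
Require Import Defs.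
From Stdlib Require Import Reals ZArith List Lra Lia.
Open Scope R_scope.
Import ListNotations.

Fixpoint fw (r t : R) (w : list bool) : R :=
  match w with nil => 0 | b :: w' => (if b then t else 0) + r * fw r t w' end.

Lemma eval_fw r t w :
  eval_word r (t, 1%Z) (0, 1%Z) w = (fw r t w, Z.of_nat (length w)).
Proof.
  induction w as [|b w IH]; simpl; [reflexivity|].
  rewrite IH; unfold sdmul; simpl.
  rewrite Zpos_P_of_succ_nat; simpl powerRZ; rewrite ?Rmult_1_r.
  f_equal; [destruct b; simpl; rewrite Rmult_1_r; reflexivity| destruct b; unfold snd; rewrite <- Z.add_1_l; reflexivity].
Qed.

Lemma diff_head (b b' : bool) t :
  Rabs ((if b then t else 0) - (if b' then t else 0)) <= Rabs t.
Proof.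
  destruct b, b'; rewrite ?Rminus_diag, ?Rabs_R0;
  try apply Rabs_pos; [rewrite Rminus_0_r | rewrite Rminus_0_l, Rabs_Ropp]; lra.
Qed.

Lemma boundA r t (hr : 0 < r <= 1/2) (ht : t <> 0) : forall w1 w2,
  length w1 = length w2 -> Rabs (fw r t w1 - fw r t w2) < 2 * Rabs t.
Proof.
  assert (0 < Rabs t) by (apply Rabs_pos_lt; auto).
  induction w1 as [|b w1 IH]; intros [|b' w2] E; simpl in *; try discriminate.
  - rewrite Rminus_diag, Rabs_R0; lra.
  - injection E as E. specialize (IH _ E). pose proof (diff_head b b' t).
    replace ((if b then t else 0) + r * fw r t w1 - ((if b' then t else 0) + r * fw r t w2))
      with (((if b then t else 0) - (if b' then t else 0)) + r * (fw r t w1 - fw r t w2)) by ring.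
    eapply Rle_lt_trans; [apply Rabs_triang|].
    rewrite Rabs_mult, (Rabs_right r) by lra.
    assert (r * Rabs (fw r t w1 - fw r t w2) < r * (2 * Rabs t)) by (apply Rmult_lt_compat_l; lra).
    assert (r * (2 * Rabs t) <= Rabs t) by nra.
    lra.
Qed.

Lemma injA r t (hr : 0 < r <= 1/2) (ht : t <> 0) : forall w1 w2,
  length w1 = length w2 -> fw r t w1 = fw r t w2 -> w1 = w2.
Proof.
  assert (0 < Rabs t) by (apply Rabs_pos_lt; auto).
  induction w1 as [|b w1 IH]; intros [|b' w2] E F; simpl in *; try discriminate; auto.
  injection E as E.
  pose proof (boundA r t hr ht _ _ E) as B.
  destruct (Bool.bool_dec b b') as [<-|Hb].
  - f_equal. apply IH; auto.
    apply Rmult_eq_reg_l with r; lra.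
  - exfalso.
    assert (Hd : (if b then t else 0) - (if b' then t else 0) = r * (fw r t w2 - fw r t w1)) by lra.
    assert (Rabs ((if b then t else 0) - (if b' then t else 0)) = Rabs t).
    { destruct b, b'; try congruence; [rewrite Rminus_0_r | rewrite Rminus_0_l, Rabs_Ropp]; auto. }
    rewrite Hd, Rabs_mult, (Rabs_right r), Rabs_minus_sym in H0 by lra.
    assert (r * Rabs (fw r t w1 - fw r t w2) < r * (2 * Rabs t)) by (apply Rmult_lt_compat_l; lra).
    assert (r * (2 * Rabs t) <= Rabs t) by nra.
    lra.
Qed.

Lemma fw_app r t w b :
  fw r t (w ++ [b]) = fw r t w + (if b then t else 0) * r ^ length w.
Proof.
  induction w as [|c w IH]; simpl; [ring|]. rewrite IH; ring.
Qed.

Lemma rev_case {A} (w : list A) : w = nil \/ exists w' a, w = w' ++ [a].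
Proof.
  destruct w as [|a w]; [auto|right].
  destruct (exists_last (l := a :: w)) as [w' [x Hx]]; [discriminate|eauto].
Qed.

Lemma head_eq (b b' : bool) t : b <> b' ->
  Rabs ((if b then t else 0) - (if b' then t else 0)) = Rabs t.
Proof.
  destruct b, b'; intros; try congruence; [rewrite Rminus_0_r | rewrite Rminus_0_l, Rabs_Ropp]; auto.
Qed.

Lemma boundB r t (hr : r >= 2) : forall n w1 w2,
  length w1 = n -> length w2 = n -> Rabs (fw r t w1 - fw r t w2) <= Rabs t * (r ^ n - 1).
Proof.
  induction n as [|n IH]; intros w1 w2 E1 E2.
  - destruct w1, w2; simpl in *; try discriminate. rewrite Rminus_diag, Rabs_R0; lra.
  - destruct (rev_case w1) as [->|[w1' [b ->]]]; [discriminate|].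
    destruct (rev_case w2) as [->|[w2' [b' ->]]]; [discriminate|].
    rewrite !length_app in E1, E2; simpl in E1, E2.
    assert (L1 : length w1' = n) by lia. assert (L2 : length w2' = n) by lia.
    specialize (IH _ _ L1 L2). rewrite !fw_app, L1, L2.
    replace (fw r t w1' + (if b then t else 0) * r ^ n - (fw r t w2' + (if b' then t else 0) * r ^ n))
      with ((fw r t w1' - fw r t w2') + ((if b then t else 0) - (if b' then t else 0)) * r ^ n) by ring.
    eapply Rle_trans; [apply Rabs_triang|].
    rewrite Rabs_mult, (Rabs_right (r ^ n)) by (left; apply pow_lt; lra).
    pose proof (diff_head b b' t).
    assert (0 < r ^ n) by (apply pow_lt; lra).
    assert (Rabs ((if b then t else 0) - (if b' then t else 0)) * r ^ n <= Rabs t * r ^ n)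
      by (apply Rmult_le_compat_r; lra).
    assert (0 <= Rabs t) by apply Rabs_pos.
    assert (Rabs t * (2 * r ^ n) <= Rabs t * (r * r ^ n)) by (apply Rmult_le_compat_l; nra).
    simpl. nra.
Qed.

Lemma injB r t (hr : r >= 2) (ht : t <> 0) : forall n w1 w2,
  length w1 = n -> length w2 = n -> fw r t w1 = fw r t w2 -> w1 = w2.
Proof.
  assert (0 < Rabs t) by (apply Rabs_pos_lt; auto).
  induction n as [|n IH]; intros w1 w2 E1 E2 F.
  - destruct w1, w2; simpl in *; try discriminate; auto.
  - destruct (rev_case w1) as [->|[w1' [b ->]]]; [discriminate|].
    destruct (rev_case w2) as [->|[w2' [b' ->]]]; [discriminate|].
    rewrite !length_app in E1, E2; simpl in E1, E2.
    assert (L1 : length w1' = n) by lia. assert (L2 : length w2' = n) by lia.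
    rewrite !fw_app, L1, L2 in F.
    assert (0 < r ^ n) by (apply pow_lt; lra).
    destruct (Bool.bool_dec b b') as [<-|Hb].
    + f_equal. apply IH; auto. lra.
    + exfalso. pose proof (boundB r t hr n _ _ L1 L2) as B.
      assert (Hd : fw r t w1' - fw r t w2' = ((if b' then t else 0) - (if b then t else 0)) * r ^ n) by lra.
      rewrite Hd, Rabs_mult, head_eq, (Rabs_right (r ^ n)) in B by (auto || lra).
      nra.
Qed.

Theorem lemma3p7 (H : R -> Prop) (r : R) (t : R) :
  is_add_subgroup H ->
  (exists h, H h /\ h <> 0) ->
  ((0 < r /\ r <= 1/2) \/ r >= 2) ->
  scaled_eq r H ->
  H t -> t <> 0 ->
  free_submonoid2 r (t, 1%Z) (0, 1%Z).
Proof.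
  intros _ _ Hr _ _ ht w1 w2 E.
  rewrite !eval_fw in E. injection E as F L.
  apply Nat2Z.inj in L.
  destruct Hr as [Hr|Hr].
  - apply (injA r t Hr ht); auto.
  - apply (injB r t Hr ht (length w1)); auto.
Qed.
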